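(* Let $(\tau,\eta)\in\Sigma$ with $\gamma=\mathrm{Re}\,\tau=0$. (i) If $(\tau,\eta)$ is not a point with $\delta=-\dot v\eta\pm\frac{\dot H}{\sqrt{\dot\rho(1+\dot\alpha\dot H^2)}}\eta$, and $\omega_1(\tau,\eta)\in i\mathbb R\setminus\{0\}$, then $\partial_\gamma\omega_1(\tau,\eta)\in\mathbb R\setminus\{0\}$. (ii) If $\omega_2(\tau,\eta)\in i\mathbb R\setminus\{0\}$, then $\partial_\gamma\omega_2(\tau,\eta)\in\mathbb R\setminus\{0\}$.
   Context: Constants of a basic state: $\dot v\neq0$, $\dot\rho>0$, $\dot H\neq0$, $\dot\alpha>0$ with $\dot\alpha\dot H^2\neq1$; $\varepsilon>0$ a parameter. Write $\tau=\gamma+i\delta$, $\Sigma=\{(\tau,\eta)\in\mathbb C\times\mathbb R:|\tau|^2+\eta^2=1,\ \gamma\ge0\}$, $\mu=\tau+i\dot v\eta$. Set \[ \omega_1^2=\eta^2+\frac{\dot\alpha\dot\rho^2\mu^4}{(\mu^2\dot\rho\dot\alpha+\eta^2)\dot H^2+\mu^2\dot\rho},\qquad \omega_2^2=\varepsilon^2\tau^2+\eta^2 . \] For $\gamma>0$, $\omega_1$ and $\omega_2$ denote the square roots with strictly positive real part; they are extended by continuity to $\gamma=0$ (where defined). $\partial_\gamma$ is the partial derivative in $\gamma$ with $\delta,\eta$ fixed. *)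

(* Defs.v *)
From mathcomp Require Import all_boot all_order all_algebra.
From mathcomp Require Import complex.
From mathcomp Require Import reals.
Set Implicit Arguments. Unset Strict Implicit. Unset Printing Implicit Defensive.
Import Order.TTheory GRing.Theory Num.Theory.
Local Open Scope ring_scope.
Local Open Scope complex_scope.

Section Defs.
Variable R : realType.

Definition cRe (z : R[i]) : R := mathcomp.real_closed.complex.Re z.
Definition cIm (z : R[i]) : R := mathcomp.real_closed.complex.Im z.

Definition mu (v : R) (tau : R[i]) (eta : R) : R[i] := tau + (v * eta)*i.

Definition om1sq (v rho H al : R) (tau : R[i]) (eta : R) : R[i] :=
  let m := mu v tau eta in
  eta%:C ^+ 2 + al%:C * rho%:C ^+ 2 * m ^+ 4 /
    ((m ^+ 2 * rho%:C * al%:C + eta%:C ^+ 2) * H%:C ^+ 2 + m ^+ 2 * rho%:C).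

Definition om2sq (eps : R) (tau : R[i]) (eta : R) : R[i] :=
  eps%:C ^+ 2 * tau ^+ 2 + eta%:C ^+ 2.

Definition inSigma (tau : R[i]) (eta : R) : Prop :=
  (cRe tau ^+ 2 + cIm tau ^+ 2 + eta ^+ 2 = 1 :> R) /\ 0 <= cRe tau.

Definition cabs (z : R[i]) : R := Num.sqrt (cRe z ^+ 2 + cIm z ^+ 2).

Definition right_lim0 (f : R -> R[i]) (l : R[i]) : Prop :=
  forall e : R, 0 < e -> exists d : R, 0 < d /\
    forall h : R, 0 < h < d -> cabs (f h - l) < e.

Definition pos_re_sqrt_branch (F W : R -> R[i]) : Prop :=
  exists h0 : R, 0 < h0 /\
    forall h : R, 0 < h < h0 -> W h ^+ 2 = F h /\ 0 < cRe (W h).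

Definition nonzero_imag (z : R[i]) : Prop := cRe z = 0 /\ z <> 0.
Definition nonzero_real (z : R[i]) : Prop := cIm z = 0 /\ z <> 0.

(* Given the branch W (omega for gamma > 0, with delta, eta fixed) and its
   continuous extension w to gamma = 0, partial_gamma omega at gamma = 0 is
   d, in R \ {0}: the (one-sided, gamma >= 0) derivative in gamma exists
   and is a nonzero real. *)
Definition dgamma0_nonzero_real (W : R -> R[i]) (w : R[i]) : Prop :=
  exists d : R[i], nonzero_real d /\ right_lim0 (fun h => (W h - w) / h%:C) d.

End Defs.

(* Main.v *)
From HB Require Import structures.
Require Import Defs.
From mathcomp Require Import all_boot all_order all_algebra.
From mathcomp Require Import complex.
From mathcomp Require Import reals.
From mathcomp Require Import all_classical all_analysis.
From mathcomp Require Import ring lra.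
Import Order.TTheory GRing.Theory Num.Theory.
Import numFieldTopology.Exports numFieldNormedType.Exports.
Local Open Scope classical_set_scope.
Local Open Scope ring_scope.
Local Open Scope complex_scope.

Definition CC (R : rcfType) : numFieldType := R[i].

Section Conv.
Variable R : realType.
Local Notation K := (CC R).
Definition FF0 : ProperFilter ((0:R)^'+) := at_right_proper_filter 0.

Lemma nearP0 (P : R -> Prop) :
  (\forall t \near (0:R)^'+, P t) <-> exists d : R, 0 < d /\ forall h, 0 < h < d -> P h.
Proof.
split.
  move=> [r /= r0 Hr]; exists r; split=> // h /andP[h0 hr]; apply: Hr => //=.
  by rewrite /ball /= sub0r normrN gtr0_norm.
move=> [d [d0 Hd]]; exists d => //= h /= hb h0; apply: Hd; rewrite h0 /=.
by move: hb; rewrite /ball /= sub0r normrN gtr0_norm.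
Qed.

Lemma normK (z : K) : `|z| = (cabs z)%:C.
Proof. exact: normc_def. Qed.

Lemma rl0P (f : R -> K) (l : K) : right_lim0 f l <-> f x @[x --> 0^'+] --> l.
Proof.
split=> [Hf|Hf].
  apply/(@cvgrPdist_lt _ _ _ _ FF0) => eps eps0.
  have := eps0; rewrite ltcE /= => /andP[/eqP Ie Re0].
  have [d [d0 Hd]] := Hf _ Re0.
  apply/nearP0; exists d; split => // h hd.
  rewrite distrC normK.
  have -> : eps = ((complex.Re eps)%:C : K) by case: eps Ie {eps0 Re0 Hd} => a b /= ->.
  by rewrite ltcR; apply: Hd.
move=> e e0.
have := (@cvgrPdist_lt _ _ _ _ FF0 _ _).1 Hf (e%:C); rewrite ltcR => /(_ e0) /nearP0 [d [d0 Hd]].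
exists d; split => // h hd. have := Hd h hd. by rewrite distrC normK ltcR.
Qed.
End Conv.
Section Alg.
Variable K : fieldType.
Lemma alg1 (a b x : K) : x != 0 -> a + x * ((b - a)/x) = b.
Proof. by move=> x0; field. Qed.
Lemma alg3 (a b W w x : K) : x != 0 -> W + w != 0 -> W * W = a -> w * w = b ->
  ((a - b) / x) * (W + w)^-1 = (W - w) / x.
Proof. by move=> x0 s0 <- <-; field; rewrite x0 s0. Qed.
End Alg.
Section Alg2.
Variable K : numFieldType.
Implicit Types (n r a Hh m mz x e j i S Cc : K).
Definition Phi1 n r a Hh m : K :=
  n ^+ 2 + a * r ^+ 2 * m ^+ 4 / ((m ^+ 2 * r * a + n ^+ 2) * Hh ^+ 2 + m ^+ 2 * r).
Definition Dm n r a Hh m : K := (m * m * r * a + n * n) * Hh * Hh + m * m * r.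
Definition Nm n r a Hh m mz : K :=
  a * r * r * (m + mz) * ((r * a * Hh * Hh + r) * (m * m) * (mz * mz)
     + n * n * Hh * Hh * (m * m + mz * mz)).
Definition Phi2 e n m : K := e ^+ 2 * m ^+ 2 + n ^+ 2.

Lemma alg_i n r a Hh x mz : x != 0 -> Dm n r a Hh (x + mz) != 0 -> Dm n r a Hh mz != 0 ->
  (Phi1 n r a Hh (x + mz) - Phi1 n r a Hh mz) / x =
  Nm n r a Hh (x + mz) mz * (Dm n r a Hh (x + mz))^-1 * (Dm n r a Hh mz)^-1.
Proof.
rewrite /Phi1 /Nm /Dm => x0 d1 d2.
have d1' : ((x + mz) ^+ 2 * r * a + n ^+ 2) * Hh ^+ 2 + (x + mz) ^+ 2 * r != 0.
  by rewrite !expr2 !mulrA.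
have d2' : (mz ^+ 2 * r * a + n ^+ 2) * Hh ^+ 2 + mz ^+ 2 * r != 0.
  by rewrite !expr2 !mulrA.
by field; rewrite ?x0 ?d1 ?d2 ?d1' ?d2'.
Qed.

Lemma alg_ii e n x j : x != 0 -> (Phi2 e n (x + j) - Phi2 e n j) / x = e ^+ 2 * (x + j + j).
Proof. by rewrite /Phi2 => x0; field. Qed.

Lemma alg2 (w : K) : w != 0 -> w + w != 0.
Proof. by move=> w0; rewrite -mulr2n mulrn_eq0 negb_or /= w0. Qed.
Lemma fin_ii i e d Cc : i != 0 -> Cc != 0 ->
  e ^+ 2 * (d * i + d * i) / (Cc * i + Cc * i) = e ^+ 2 * d / Cc.
Proof. move=> i0 c0; field; rewrite c0 /=; apply: alg2; exact: mulf_neq0. Qed.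

Lemma sqi i S : i * i = -1 -> S * i * (S * i) = - (S * S).
Proof. by move=> hi; rewrite mulrACA hi mulrN1. Qed.

Lemma Dm_i i n r a Hh S : i * i = -1 ->
  Dm n r a Hh (S * i) = (- (S * S) * r * a + n * n) * Hh * Hh + - (S * S) * r.
Proof. by move=> hi; rewrite /Dm sqi. Qed.

Lemma fin_i i n r a Hh S Cc : i * i = -1 -> i != 0 -> Cc != 0 ->
  (- (S * S) * r * a + n * n) * Hh * Hh + - (S * S) * r != 0 ->
  Nm n r a Hh (S * i) (S * i) * (Dm n r a Hh (S * i))^-1 * (Dm n r a Hh (S * i))^-1
    / (Cc * i + Cc * i) =
  a * r * r * S * ((r * a * Hh * Hh + r) * (S * S) * (S * S) - n * n * Hh * Hh * (S * S + S * S))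
    / (Cc * ((- (S * S) * r * a + n * n) * Hh * Hh + - (S * S) * r)
          * ((- (S * S) * r * a + n * n) * Hh * Hh + - (S * S) * r)).
Proof.
move=> hi i0 c0 d0; rewrite (Dm_i _ _ _ _ _ _ hi) /Nm (sqi _ _ hi).
field; rewrite d0 c0 /=; apply: alg2; exact: mulf_neq0.
Qed.

Lemma phi1_i i n r a Hh S : i * i = -1 ->
  Phi1 n r a Hh (S * i) =
  n * n + a * (r * r) * ((S * S) * (S * S)) /
    ((- (S * S) * r * a + n * n) * Hh * Hh + - (S * S) * r).
Proof.
move=> hi.
have E : (S * i) ^+ 2 = - (S * S) by rewrite expr2 sqi.
have E4 : (S * i) ^+ 4 = (S * S) * (S * S).
  by rewrite (_ : 4 = 2 * 2)%N // exprM E sqrrN expr2.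
by rewrite /Phi1 E4 E !expr2 !mulrA.
Qed.

Lemma phi2_i i e n S : i * i = -1 -> Phi2 e n (S * i) = - (e * e * (S * S)) + n * n.
Proof. by move=> hi; rewrite /Phi2 (expr2 (S * i)) (sqi _ _ hi) !expr2 mulrN. Qed.
End Alg2.
Arguments Dm {K}. Arguments Nm {K}. Arguments Phi1 {K}. Arguments Phi2 {K}.
Arguments alg_i {K}. Arguments alg_ii {K}. Arguments fin_ii {K}. Arguments sqi {K}.
Arguments Dm_i {K}. Arguments fin_i {K}. Arguments phi1_i {K}. Arguments phi2_i {K}. Arguments alg2 {K}.

Section RealL.
Variable R : realFieldType.
Lemma real_ii (c eps delta eta : R) : c != 0 ->
  - (c * c) = - (eps * eps * (delta * delta)) + eta * eta -> delta != 0.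
Proof.
move=> c0 E; apply/eqP => d0; move: E; rewrite d0 !mul0r mulr0 oppr0 add0r => E.
have : 0 < c * c by rewrite lt0r mulf_neq0 //= -expr2 sqr_ge0.
have : 0 <= eta * eta by rewrite -expr2 sqr_ge0.
lra.
Qed.

Lemma real_i (rho al H eta s c : R) : 0 < rho -> 0 < al -> c != 0 ->
  (- (s * s) * rho * al + eta * eta) * H * H + - (s * s) * rho != 0 ->
  - (c * c) = eta * eta + al * (rho * rho) * ((s * s) * (s * s)) /
    ((- (s * s) * rho * al + eta * eta) * H * H + - (s * s) * rho) ->
  al * rho * rho * s * ((rho * al * H * H + rho) * (s * s) * (s * s)
     - eta * eta * H * H * (s * s + s * s)) != 0.
Proof.
set D := (- (s * s) * rho * al + eta * eta) * H * H + - (s * s) * rho.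
move=> r0 a0 c0 D0 E.
have sq (x : R) : 0 <= x * x by rewrite -expr2 sqr_ge0.
have E' : - (c * c) * D = eta * eta * D + al * (rho * rho) * ((s * s) * (s * s)).
  by rewrite E mulrDl divfK.
have cc : 0 < c * c by rewrite lt0r mulf_neq0 //= -expr2 sqr_ge0.
have ee : 0 <= eta * eta by apply: sq.
have hs : s != 0.
  apply/eqP => s0; move: E; rewrite s0 !(mul0r, mulr0, addr0) => E.
  lra.
set B := rho * al * H * H + rho.
set C := eta * eta * H * H.
have eD : D = C - B * (s * s) by rewrite /D /C /B; ring.
have hX : B * (s * s) - C * 2 != 0.
  apply/eqP => X0.
  have eB : B * (s * s) = C * 2 by apply/eqP; rewrite -subr_eq0 X0.
  have DC : D = - C by rewrite eD eB; ring.
  have C0 : C != 0 by rewrite -oppr_eq0 -DC.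
  have E2 : (c * c + eta * eta) * C * (B * B) = al * (rho * rho) * ((B * (s * s)) * (B * (s * s))).
    have : (c * c + eta * eta) * C = al * (rho * rho) * ((s * s) * (s * s)).
      move: E'; rewrite DC => E''; apply/eqP; rewrite -subr_eq0; apply/eqP.
      transitivity (- (c * c) * - C - (eta * eta * - C + al * (rho * rho) * ((s * s) * (s * s)))).
        by ring.
      by rewrite E'' subrr.
    by move=> ->; ring.
  rewrite eB in E2.
  have E3 : C * ((c * c + eta * eta) * (B * B) - al * (rho * rho) * C * 4) = 0.
    transitivity ((c * c + eta * eta) * C * (B * B) - al * (rho * rho) * (C * 2 * (C * 2))).
      by ring.
    by rewrite E2 subrr.
  move: E3 => /eqP; rewrite mulf_eq0 (negbTE C0) /= subr_eq0 => /eqP E3.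
  have E4 : rho * rho * (c * c * ((al * (H * H) + 1) * (al * (H * H) + 1))
      + eta * eta * ((al * (H * H) - 1) * (al * (H * H) - 1))) = 0.
    transitivity ((c * c + eta * eta) * (B * B) - al * (rho * rho) * C * 4).
      by rewrite /B /C; ring.
    by rewrite E3 subrr.
  have rr : 0 < rho * rho by rewrite mulr_gt0.
  have p1 : 0 < (al * (H * H) + 1) * (al * (H * H) + 1).
    have : 0 <= al * (H * H) by apply: mulr_ge0; [exact: ltW | exact: sq].
    by move=> h; apply: mulr_gt0; lra.
  have p2 : 0 <= (al * (H * H) - 1) * (al * (H * H) - 1) by apply: sq.
  have p3 : 0 < c * c * ((al * (H * H) + 1) * (al * (H * H) + 1)) by rewrite mulr_gt0.
  have p4 : 0 <= eta * eta * ((al * (H * H) - 1) * (al * (H * H) - 1)) by rewrite mulr_ge0.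
  move/eqP: E4; rewrite mulf_eq0 (gt_eqF rr) /= => /eqP; lra.
have -> : (rho * al * H * H + rho) * (s * s) * (s * s) - eta * eta * H * H * (s * s + s * s)
   = (s * s) * (B * (s * s) - C * 2) by rewrite /B /C; ring.
by rewrite !mulf_neq0 // ?gt_eqF.
Qed.
End RealL.
Section RealD.
Variable R : rcfType.
Lemma real_D (v rho al H delta eta : R) : 0 < rho -> 0 < al ->
  delta <> - v * eta + H / Num.sqrt (rho * (1 + al * H ^+ 2)) * eta ->
  delta <> - v * eta - H / Num.sqrt (rho * (1 + al * H ^+ 2)) * eta ->
  (- ((delta + v * eta) * (delta + v * eta)) * rho * al + eta * eta) * H * H
     + - ((delta + v * eta) * (delta + v * eta)) * rho != 0.
Proof.
move=> r0 a0 d1 d2.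
set q := Num.sqrt (rho * (1 + al * H ^+ 2)).
have hp : 0 < rho * (1 + al * H ^+ 2).
  apply: mulr_gt0 => //; have : 0 <= al * H ^+ 2 by apply: mulr_ge0; [exact: ltW | exact: sqr_ge0].
  lra.
have q0 : 0 < q by rewrite sqrtr_gt0.
have qq : q * q = rho * (1 + al * H ^+ 2) by rewrite -expr2 sqr_sqrtr ?ltW.
set s := delta + v * eta.
apply/eqP => D0.
have E : (H * eta - s * q) * (H * eta + s * q) = 0.
  transitivity ((- (s * s) * rho * al + eta * eta) * H * H + - (s * s) * rho).
    by rewrite -[_ * _ - _ * _]/(_) ; rewrite [LHS](_ : _ = H * eta * (H * eta) - s * s * (q * q)); [rewrite qq; ring | ring].
  exact: D0.
have qn : q != 0 by rewrite gt_eqF.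
move/eqP: E; rewrite mulf_eq0 => /orP[] /eqP E.
  apply: d1; apply: (mulIf qn).
  have e : s * q = H * eta by apply/eqP; rewrite eq_sym -subr_eq0 E.
  have -> : (- v * eta + H / q * eta) * q = H * eta - v * eta * q by field.
  by rewrite -e /s; ring.
apply: d2; apply: (mulIf qn).
have e : s * q = - (H * eta) by apply/eqP; rewrite -addr_eq0 addrC E.
have -> : (- v * eta - H / q * eta) * q = - (H * eta) - v * eta * q by field.
by rewrite -e /s; ring.
Qed.
End RealD.

Section Gen.
Variable R : realType.
Local Notation K := (CC R).
Context (F : set_system R) {FF : ProperFilter F}.

Lemma gen_branch (Fn W : R -> K) (w L : K) :
  (\forall h \near F, h != 0 /\ W h ^+ 2 = Fn h) ->
  W @ F --> w -> w != 0 ->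
  (fun h => (Fn h - Fn 0) / (h%:C : K)) @ F --> L ->
  (fun h => (h%:C : K)) @ F --> 0 ->
  w ^+ 2 = Fn 0 /\ (fun h => (W h - w) / (h%:C : K)) @ F --> L / (w + w).
Proof.
Proof.
move=> Hn cW w0 cQ cid.
pose Q := fun h => (Fn h - Fn 0) / (h%:C : K).
have eF : \forall h \near F, (fun h => Fn 0 + (h%:C : K) * Q h) h = Fn h.
  apply: (@filterS _ _ FF _ _ _ Hn).
  move=> h [h0 _] /=.
  have hC : (h%:C : K) != 0 by apply: contra h0 => /eqP[->].
  exact: alg1.
have cF : Fn @ F --> Fn 0.
  have h1 : (fun h => Fn 0 + (h%:C : K) * Q h) @ F --> Fn 0 + 0 * L.
    apply: cvgD; first exact: cvg_cst.
    exact: (@cvgM K R F FF (fun h => (h%:C : K)) Q 0 L cid cQ).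
  rewrite mul0r addr0 in h1.
  exact: cvg_trans (near_eq_cvg eF) h1.
have W2 : (fun h => W h * W h) @ F --> w * w := @cvgM K R F FF W W w w cW cW.
have eW2 : \forall h \near F, Fn h = W h * W h.
  apply: (@filterS _ _ FF _ _ _ Hn) => h [_ e].
  by rewrite -e expr2.
have W2' : (fun h => W h * W h) @ F --> Fn 0 by exact: cvg_trans (near_eq_cvg eW2) cF.
have w2 : w * w = Fn 0 := @cvg_unique K (@norm_hausdorff K K) _ (fmap_proper_filter (fun h => W h * W h) FF) _ _ W2 W2'.
split; first by rewrite expr2.
have cS : (fun h => W h + w) @ F --> w + w.
  apply: cvgD; [exact: cW | exact: cvg_cst].
have nz : w + w != 0 := alg2 w w0.
have nS := @cvgr_neq0 K K R F FF _ _ cS nz.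
have eD : \forall h \near F, (fun h => Q h * (W h + w)^-1) h = (W h - w) / (h%:C : K).
  apply: (@filterS2 _ _ FF _ _ _ _ Hn nS) => h [h0 e] s0 /=.
  have hC : (h%:C : K) != 0 by apply: contra h0 => /eqP[->].
  exact: alg3 hC s0 (etrans (esym (expr2 _)) e) w2.
have cI : (fun h => (W h + w)^-1) @ F --> (w + w)^-1.
  exact: (@cvgV K R F FF (fun h => W h + w) (w+w) nz cS).
have cP := @cvgM K R F FF Q (fun h => (W h + w)^-1) L (w+w)^-1 cQ cI.
exact: cvg_trans (near_eq_cvg eD) cP.
Qed.

Lemma my_cC (c : K) : (fun _ : R => c) @ F --> c.
Proof. exact: cvg_cst. Qed.
Lemma my_cD {f g : R -> K} {a b : K} : f @ F --> a -> g @ F --> b ->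
  (fun x => f x + g x) @ F --> a + b.
Proof. by move=> hf hg; exact: (@cvgD _ _ _ F FF f g a b hf hg). Qed.
Lemma my_cM {f g : R -> K} {a b : K} : f @ F --> a -> g @ F --> b ->
  (fun x => f x * g x) @ F --> a * b.
Proof. exact: (@cvgM K R F FF f g a b). Qed.
Lemma my_cV {f : R -> K} {a : K} : a != 0 -> f @ F --> a -> (fun x => (f x)^-1) @ F --> a^-1.
Proof. exact: (@cvgV K R F FF f a). Qed.

Lemma contD (n r a Hh : K) (g : R -> K) (mz : K) : g @ F --> mz ->
  (fun h => Dm n r a Hh (g h)) @ F --> Dm n r a Hh mz.
Proof.
move=> hg.
have h2 := my_cM hg hg.
have h5 := my_cD (my_cM (my_cM h2 (my_cC r)) (my_cC a)) (my_cC (n * n)).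
have h6 := my_cM (my_cM h5 (my_cC Hh)) (my_cC Hh).
exact: (my_cD h6 (my_cM h2 (my_cC r))).
Qed.

Lemma contN (n r a Hh : K) (g : R -> K) (mz : K) : g @ F --> mz ->
  (fun h => Nm n r a Hh (g h) mz) @ F --> Nm n r a Hh mz mz.
Proof.
move=> hg.
have h2 := my_cM hg hg.
have big := my_cD (my_cM (my_cM (my_cC (r * a * Hh * Hh + r)) h2) (my_cC (mz * mz)))
   (my_cM (my_cC (n * n * Hh * Hh)) (my_cD h2 (my_cC (mz * mz)))).
exact: (my_cM (my_cM (my_cC (a * r * r)) (my_cD hg (my_cC mz))) big).
Qed.
End Gen.

Section At0.
Variable R : realType.
Local Notation K := (CC R).

Lemma cid0 : (fun h : R => (h%:C : K)) @ 0^'+ --> 0.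
Proof.
apply/rl0P => e e0; exists e; split => // h /andP[h0 he].
have -> : (h%:C : K) - 0 = h%:C by rewrite subr0.
rewrite /cabs /cRe /cIm /= expr0n /= addr0 sqrtr_sqr gtr0_norm //.
Qed.

Lemma near_br (Fn W : R -> K) : pos_re_sqrt_branch Fn W ->
  \forall h \near 0^'+, h != 0 /\ W h ^+ 2 = Fn h.
Proof.
move=> [h0 [h0p Hb]]; apply/nearP0; exists h0; split => // h hh.
have [e _] := Hb h hh; split => //; move/andP: hh => [hp _].
by rewrite gt_eqF.
Qed.

Lemma near_nz : \forall h \near (0:R)^'+, h != 0.
Proof. by apply/nearP0; exists 1; split => // h /andP[hp _]; rewrite gt_eqF. Qed.

Lemma branch0 (Fn W : R -> K) (w L : K) :
  pos_re_sqrt_branch Fn W -> right_lim0 W w -> w != 0 ->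
  right_lim0 (fun h => (Fn h - Fn 0) / (h%:C : K)) L ->
  w ^+ 2 = Fn 0 /\ right_lim0 (fun h => (W h - w) / (h%:C : K)) (L / (w + w)).
Proof.
move=> hb /rl0P hw w0 /rl0P hq.
have [e1 e2] := @gen_branch R _ (FF0 R) Fn W w L (@near_br Fn W hb) hw w0 hq cid0.
by split => //; apply/rl0P.
Qed.
End At0.

Section Push.
Variables (R0 K' : fieldType) (f : {rmorphism R0 -> K'}).
Lemma push_E (eta al rho s H : R0) :
  f (eta * eta + al * (rho * rho) * ((s * s) * (s * s)) /
    ((- (s * s) * rho * al + eta * eta) * H * H + - (s * s) * rho)) =
  f eta * f eta + f al * (f rho * f rho) * ((f s * f s) * (f s * f s)) /
    ((- (f s * f s) * f rho * f al + f eta * f eta) * f H * f H + - (f s * f s) * f rho).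
Proof. by rewrite !(rmorphD, rmorphN, rmorphM, fmorphV). Qed.
Lemma push_L (eta al rho s H c : R0) :
  f (al * rho * rho * s * ((rho * al * H * H + rho) * (s * s) * (s * s)
     - eta * eta * H * H * (s * s + s * s))
    / (c * ((- (s * s) * rho * al + eta * eta) * H * H + - (s * s) * rho)
          * ((- (s * s) * rho * al + eta * eta) * H * H + - (s * s) * rho))) =
  f al * f rho * f rho * f s * ((f rho * f al * f H * f H + f rho) * (f s * f s) * (f s * f s)
     - f eta * f eta * f H * f H * (f s * f s + f s * f s))
    / (f c * ((- (f s * f s) * f rho * f al + f eta * f eta) * f H * f H + - (f s * f s) * f rho)
          * ((- (f s * f s) * f rho * f al + f eta * f eta) * f H * f H + - (f s * f s) * f rho)).
Proof. by rewrite !(rmorphD, rmorphN, rmorphM, rmorphB, fmorphV). Qed.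
Lemma push_D (eta al rho s H : R0) :
  f ((- (s * s) * rho * al + eta * eta) * H * H + - (s * s) * rho) =
  (- (f s * f s) * f rho * f al + f eta * f eta) * f H * f H + - (f s * f s) * f rho.
Proof. by rewrite !(rmorphD, rmorphN, rmorphM). Qed.
End Push.

Section Parts.
Variable R : realType.
Local Notation K := (CC R).

Lemma hiC : ('i * 'i : K) = -1.
Proof. apply/eqP; rewrite eq_complex /=; apply/andP; split; apply/eqP; ring. Qed.

Lemma iC_nz : ('i : K) != 0.
Proof. by apply/eqP => -[] /eqP; rewrite oner_eq0. Qed.

Lemma cRi (x : R) : (0 +i* x : K) = x%:C * 'i.
Proof. apply/eqP; rewrite eq_complex /=; apply/andP; split; apply/eqP; ring. Qed.

Lemma w_form (w : K) : nonzero_imag w -> exists c : R, c != 0 /\ w = c%:C * 'i.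
Proof.
case: w => a c [/= Ra nz]; rewrite /cRe /= in Ra; subst a.
exists c; rewrite -cRi; split => //.
by apply/eqP => c0; apply: nz; rewrite c0.
Qed.

Lemma nzr (r : R) : r != 0 -> nonzero_real (r%:C : K).
Proof. by move=> r0; split => // -[] /eqP; rewrite (negbTE r0). Qed.

Lemma cinj (x y : R) : (x%:C : K) = y%:C -> x = y.
Proof. by case. Qed.

Lemma part_ii (eps delta eta : R) (W : R -> R[i]) (w : R[i]) : 0 < eps ->
  pos_re_sqrt_branch (fun g => om2sq eps (g +i* delta) eta) W ->
  right_lim0 W w -> nonzero_imag w -> dgamma0_nonzero_real W w.
Proof.
move=> e0 hb hw nw.
have [c [c0 ew]] := @w_form w nw.
have w0 : w != 0 by apply/eqP; exact: nw.2.
pose j : K := delta%:C * 'i.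
pose Fn : R -> K := fun g => om2sq eps (g +i* delta) eta.
have eF : forall x : R, Fn x = Phi2 (eps%:C : K) eta%:C (x%:C + j).
  move=> x; rewrite /Fn /om2sq /Phi2; congr (_ * _ ^+ 2 + _).
  apply/eqP; rewrite eq_complex /=; apply/andP; split; apply/eqP; ring.
have eF0 : Fn 0 = Phi2 (eps%:C : K) eta%:C j by rewrite /Fn /om2sq /Phi2 /j -cRi.
pose L : K := (eps%:C : K) ^+ 2 * (j + j).
have hq : right_lim0 (fun h => (Fn h - Fn 0) / (h%:C : K)) L.
  apply/rl0P.
  have cg : (fun h : R => (h%:C : K) + j) @ 0^'+ --> 0 + j :=
    @my_cD R _ (FF0 R) _ _ _ _ (@cid0 R) (@my_cC R _ (FF0 R) j).
  rewrite add0r in cg.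
  have cl := @my_cM R _ (FF0 R) _ _ _ _ (@my_cC R _ (FF0 R) ((eps%:C : K) ^+ 2))
     (@my_cD R _ (FF0 R) _ _ _ _ cg (@my_cC R _ (FF0 R) j)).
  apply: cvg_trans (@near_eq_cvg _ _ _ (FF0 R) _ _ _) cl.
  apply: (@filterS _ _ (FF0 R) _ _ _ (near_nz R)) => h h0 /=.
  have hC : (h%:C : K) != 0 by apply: contra h0 => /eqP[->].
  by rewrite eF eF0 alg_ii.
have [w2 hl] := @branch0 R Fn W w L hb hw w0 hq.
have E1 : (c%:C * 'i : K) ^+ 2 = - (c%:C * c%:C) by rewrite expr2 (sqi _ _ hiC).
have E2 := phi2_i 'i (eps%:C : K) eta%:C delta%:C hiC.
have E : ((- (c * c))%:C : K) = (- (eps * eps * (delta * delta)) + eta * eta)%:C.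
  by rewrite rmorphN rmorphM rmorphD rmorphN !rmorphM -E1 -E2 -eF0 -w2 ew.
have d0 := @real_ii R c eps delta eta c0 (@cinj _ _ E).
exists (L / (w + w)); split => //.
have -> : L / (w + w) = ((eps ^+ 2 * delta / c)%:C : K).
  rewrite ew /L /j (fin_ii 'i (eps%:C : K) (delta%:C) (c%:C) iC_nz) ?fmorph_div ?rmorphM ?rmorphXn //.
  by apply: contra c0 => /eqP[->].
apply: nzr; apply: mulf_neq0; last by rewrite invr_neq0.
apply: mulf_neq0 => //; apply: expf_neq0; by rewrite gt_eqF.
Qed.

Lemma part_i (v rho H al delta eta : R) (W : R -> R[i]) (w : R[i]) :
  0 < rho -> 0 < al ->
  (- ((delta + v * eta) * (delta + v * eta)) * rho * al + eta * eta) * H * H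
     + - ((delta + v * eta) * (delta + v * eta)) * rho != 0 ->
  pos_re_sqrt_branch (fun g => om1sq v rho H al (g +i* delta) eta) W ->
  right_lim0 W w -> nonzero_imag w -> dgamma0_nonzero_real W w.
Proof.
move=> r0 a0 hD hb hw nw.
have [c [c0 ew]] := @w_form w nw.
have w0 : w != 0 by apply/eqP; exact: nw.2.
have cC0 : (c%:C : K) != 0 by apply: contra c0 => /eqP[->].
pose s := delta + v * eta.
pose m0 : K := s%:C * 'i.
pose Fn : R -> K := fun g => om1sq v rho H al (g +i* delta) eta.
have em : forall x : R, mu v (x +i* delta) eta = (x%:C : K) + m0.
  move=> x; rewrite /mu /m0; apply/eqP; rewrite eq_complex /=; apply/andP; split; apply/eqP; rewrite /s; ring.
have em0 : mu v (0 +i* delta) eta = m0.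
  rewrite /mu /m0; apply/eqP; rewrite eq_complex /=; apply/andP; split; apply/eqP; rewrite /s; ring.
have eF : forall x : R, Fn x = Phi1 (eta%:C : K) rho%:C al%:C H%:C ((x%:C : K) + m0).
  by move=> x; rewrite -em; reflexivity.
have eF0 : Fn 0 = Phi1 (eta%:C : K) rho%:C al%:C H%:C m0.
  by rewrite -em0; reflexivity.
have hDC : (- ((s%:C : K) * s%:C) * rho%:C * al%:C + eta%:C * eta%:C) * H%:C * H%:C
     + - (s%:C * s%:C) * rho%:C != 0.
  have -> : (- ((s%:C : K) * s%:C) * rho%:C * al%:C + eta%:C * eta%:C) * H%:C * H%:C
     + - (s%:C * s%:C) * rho%:C =
     (((- (s * s) * rho * al + eta * eta) * H * H + - (s * s) * rho)%:C : K).
    exact: (esym (@push_D _ _ _ eta al rho s H)).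
  by apply: contra hD => /eqP[->].
have hD0 : Dm (eta%:C : K) rho%:C al%:C H%:C m0 != 0.
  by rewrite /m0 (Dm_i 'i (eta%:C : K) rho%:C al%:C H%:C (s%:C) hiC).
pose L : K := Nm (eta%:C : K) rho%:C al%:C H%:C m0 m0 * (Dm (eta%:C : K) rho%:C al%:C H%:C m0)^-1
   * (Dm (eta%:C : K) rho%:C al%:C H%:C m0)^-1.
have hq : right_lim0 (fun h => (Fn h - Fn 0) / (h%:C : K)) L.
  apply/rl0P.
  have cg : (fun h : R => (h%:C : K) + m0) @ 0^'+ --> 0 + m0 :=
    @my_cD R _ (FF0 R) _ _ _ _ (@cid0 R) (@my_cC R _ (FF0 R) m0).
  rewrite add0r in cg.
  have cDm := @contD R _ (FF0 R) (eta%:C : K) rho%:C al%:C H%:C _ _ cg.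
  have nD := @cvgr_neq0 K K R _ (FF0 R) _ _ cDm hD0.
  have cl := @my_cM R _ (FF0 R) _ _ _ _
    (@my_cM R _ (FF0 R) _ _ _ _ (@contN R _ (FF0 R) (eta%:C : K) rho%:C al%:C H%:C _ _ cg)
       (@my_cV R _ (FF0 R) _ _ hD0 cDm))
    (@my_cC R _ (FF0 R) (Dm (eta%:C : K) rho%:C al%:C H%:C m0)^-1).
  apply: cvg_trans (@near_eq_cvg _ _ _ (FF0 R) _ _ _) cl.
  apply: (@filterS2 _ _ (FF0 R) _ _ _ _ nD (near_nz R)) => h d1 h0 /=.
  have hC : (h%:C : K) != 0 by apply: contra h0 => /eqP[->].
  by rewrite eF eF0 alg_i.
have [w2 hl] := @branch0 R Fn W w L hb hw w0 hq.
have hDs : (- (s * s) * rho * al + eta * eta) * H * H + - (s * s) * rho != 0 := hD.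
have em0' : m0 = s%:C * 'i := erefl.
clearbody m0 s.
have E1 : (c%:C * 'i : K) ^+ 2 = - (c%:C * c%:C) by rewrite expr2 (sqi _ _ hiC).
have E2 := phi1_i 'i (eta%:C : K) rho%:C al%:C H%:C s%:C hiC.
have E : ((- (c * c))%:C : K) = (eta * eta + al * (rho * rho) * ((s * s) * (s * s)) /
    ((- (s * s) * rho * al + eta * eta) * H * H + - (s * s) * rho))%:C.
  transitivity ((c%:C * 'i : K) ^+ 2); first by rewrite E1 rmorphN rmorphM.
  rewrite -ew w2 eF0 em0' E2.
  exact: (esym (@push_E _ _ _ eta al rho s H)).
have d0 := @real_i R rho al H eta s c r0 a0 c0 hDs (@cinj _ _ E).
exists (L / (w + w)); split => //.
have -> : L / (w + w) = ((al * rho * rho * s * ((rho * al * H * H + rho) * (s * s) * (s * s)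
     - eta * eta * H * H * (s * s + s * s))
    / (c * ((- (s * s) * rho * al + eta * eta) * H * H + - (s * s) * rho)
          * ((- (s * s) * rho * al + eta * eta) * H * H + - (s * s) * rho)))%:C : K).
  rewrite ew /L em0' (fin_i 'i (eta%:C : K) rho%:C al%:C H%:C s%:C c%:C hiC iC_nz cC0 hDC).
  exact: (esym (@push_L _ _ _ eta al rho s H c)).
apply: nzr; apply: mulf_neq0 => //; rewrite invr_neq0 // !mulf_neq0 //.
Qed.
End Parts.

Theorem lemma7p2 (R : realType) (v rho H al eps : R)
  (hv : v != 0) (hrho : 0 < rho) (hH : H != 0) (hal : 0 < al)
  (halH : al * H ^+ 2 != 1) (heps : 0 < eps) :
  (* (i) *)
  (forall delta eta : R,
     inSigma (0 +i* delta) eta ->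
     delta <> - v * eta + H / Num.sqrt (rho * (1 + al * H ^+ 2)) * eta ->
     delta <> - v * eta - H / Num.sqrt (rho * (1 + al * H ^+ 2)) * eta ->
     forall (W : R -> R[i]) (w : R[i]),
       pos_re_sqrt_branch (fun g => om1sq v rho H al (g +i* delta) eta) W ->
       right_lim0 W w ->
       nonzero_imag w ->
       dgamma0_nonzero_real W w)
  /\
  (* (ii) *)
  (forall delta eta : R,
     inSigma (0 +i* delta) eta ->
     forall (W : R -> R[i]) (w : R[i]),
       pos_re_sqrt_branch (fun g => om2sq eps (g +i* delta) eta) W ->
       right_lim0 W w ->
       nonzero_imag w ->
       dgamma0_nonzero_real W w).
Proof.
split.
- move=> delta eta _ hd1 hd2 W w hb hw nw.
  apply: (@part_i R v rho H al delta eta W w hrho hal _ hb hw nw).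
  exact: (@real_D R v rho al H delta eta hrho hal hd1 hd2).
- move=> delta eta _ W w hb hw nw.
  exact: (@part_ii R eps delta eta W w heps hb hw nw).
Qed.
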